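(* Assume $\sqrt T\le W\le T$ and $968kS\le T$. Let $\tau$ be the smallest integer $r\ge1$ such that, after the first $r$ rounds of uniform sampling, some arm $i$ satisfies $\sum_{s=1}^{n_i(r)}Y_{i,s}>420c^2\log W$, where $n_i(r)$ is the number of $r'\le r$ with $U_{r'}=i$. Then on the event $E$, $$128kS\le\tau\le 968kS.$$
   Context: Bandit setup: $k$ arms, arm $i$ a distribution on $[0,1]$ with mean $\mu_i$, $\mu^*:=\max_i\mu_i>0$. $\log$ is the natural logarithm; $c:=3$; $T$ is the overall horizon, $W$ a window length (positive integer), and $S:=\frac{c^2\log T}{\mu^*}$. Canonical model: a $k\times T$ table $(Y_{i,s})$ of independent entries with $Y_{i,s}$ distributed as arm $i$, the $s$-th pull of arm $i$ yielding $Y_{i,s}$; $\widehat\mu_{i,s}:=\frac1s\sum_{r=1}^sY_{i,r}$. Uniform sampling is modeled by independent uniform $U_1,\dots,U_T\in[k]$ (independent of the table); the $r$-th round of uniform sampling pulls $U_r$. Events: $E_1$: for every integer $r$ with $128kS\le r\le T$ and every arm $i$, the number of $r'\le r$ with $U_{r'}=i$ is at least $\frac{r}{2k}$ and at most $\frac{3r}{2k}$. $E_2$: for every arm $i$ with $\mu_i>\frac{\mu^*}{64}$ and every integer $s$ with $64S\le s\le T$, $|\mu_i-\widehat\mu_{i,s}|\le c\sqrt{\frac{\mu_i\log T}{s}}$. $E_3$: for every arm $j$ with $\mu_j\le\frac{\mu^*}{64}$ and every integer $s$ with $64S\le s\le T$, $\widehat\mu_{j,s}<\frac{\mu^*}{32}$.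 $E:=E_1\cap E_2\cap E_3$. *)

(* Defs.v *)
From Stdlib Require Import Reals Lra Lia.
Open Scope R_scope.

(* Arms are indexed by natural numbers i < k; rounds/pulls are 1-indexed. *)

Definition c : R := 3.

(* mu* = max_{i<k} mu_i  (for k >= 1 and nonnegative means this is the max) *)
Fixpoint maxmu (mu : nat -> R) (n : nat) : R :=
  match n with
  | O => 0
  | S n' => Rmax (maxmu mu n') (mu n')
  end.

Definition Sparam (mu : nat -> R) (k T : nat) : R :=
  c ^ 2 * ln (INR T) / maxmu mu k.

Fixpoint cnt (U : nat -> nat) (i r : nat) : nat :=
  match r with
  | O => O
  | S r' => (cnt U i r' + (if Nat.eqb (U r) i then 1 else 0))%nat
  end.

Fixpoint psum (Y : nat -> nat -> R) (i n : nat) : R :=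
  match n with
  | O => 0
  | S n' => psum Y i n' + Y i n
  end.

Definition muhat (Y : nat -> nat -> R) (i s : nat) : R := psum Y i s / INR s.

Definition E1 (U : nat -> nat) (mu : nat -> R) (k T : nat) : Prop :=
  forall r : nat, 128 * INR k * Sparam mu k T <= INR r -> (r <= T)%nat ->
  forall i : nat, (i < k)%nat ->
    INR r / (2 * INR k) <= INR (cnt U i r) <= 3 * INR r / (2 * INR k).

Definition E2 (Y : nat -> nat -> R) (mu : nat -> R) (k T : nat) : Prop :=
  forall i : nat, (i < k)%nat -> mu i > maxmu mu k / 64 ->
  forall s : nat, 64 * Sparam mu k T <= INR s -> (s <= T)%nat ->
    Rabs (mu i - muhat Y i s) <= c * sqrt (mu i * ln (INR T) / INR s).

Definition E3 (Y : nat -> nat -> R) (mu : nat -> R) (k T : nat) : Prop :=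
  forall j : nat, (j < k)%nat -> mu j <= maxmu mu k / 64 ->
  forall s : nat, 64 * Sparam mu k T <= INR s -> (s <= T)%nat ->
    muhat Y j s < maxmu mu k / 32.

Definition Eevent Y U mu k T : Prop := E1 U mu k T /\ E2 Y mu k T /\ E3 Y mu k T.

Definition stop_cond (Y : nat -> nat -> R) (U : nat -> nat) (k W r : nat) : Prop :=
  exists i : nat, (i < k)%nat /\ psum Y i (cnt U i r) > 420 * c ^ 2 * ln (INR W).

(* Main.v *)
Require Import Defs.
From Stdlib Require Import Reals.
From Stdlib Require Import Lra Lia Classical ZArith.
Open Scope R_scope.

Lemma my_ln_le x y : 0 < x -> x <= y -> ln x <= ln y.
Proof.
  intros Hx Hxy. destruct (Rle_lt_or_eq_dec _ _ Hxy) as [H|H].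
  - left. apply ln_increasing; auto.
  - subst; lra.
Qed.

Lemma Rabs_bounds a b : Rabs a <= b -> - b <= a <= b.
Proof.
  intros H. pose proof (Rle_abs a). pose proof (Rle_abs (-a)).
  rewrite Rabs_Ropp in *. lra.
Qed.

Lemma INR_floor x : 0 <= x -> exists n, INR n <= x < INR n + 1.
Proof.
  intros Hx. destruct (archimed x) as [H1 H2].
  assert (Hz : (0 < up x)%Z) by (apply lt_IZR; lra).
  exists (Z.to_nat (up x - 1)). rewrite INR_IZR_INZ, Z2Nat.id by lia.
  rewrite minus_IZR. simpl. lra.
Qed.

Lemma psum_mono Y i T a b : (forall s, (1 <= s <= T)%nat -> 0 <= Y i s) ->
  (a <= b)%nat -> (b <= T)%nat -> psum Y i a <= psum Y i b.
Proof.
  intros HY Hab HbT. induction b.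
  - assert (a = 0)%nat by lia. subst. lra.
  - destruct (Nat.eq_dec a (S b)) as [->|Hne]; [lra|].
    simpl. assert (0 <= Y i (S b)) by (apply HY; lia).
    assert (psum Y i a <= psum Y i b) by (apply IHb; lia). lra.
Qed.

Lemma cnt_mono U i a b : (a <= b)%nat -> (cnt U i a <= cnt U i b)%nat.
Proof.
  intros Hab. induction b.
  - assert (a = 0)%nat by lia. subst. lia.
  - destruct (Nat.eq_dec a (S b)) as [->|Hne]; [lia|].
    simpl. assert (cnt U i a <= cnt U i b)%nat by (apply IHb; lia). lia.
Qed.

Lemma cnt_le U i r : (cnt U i r <= r)%nat.
Proof. induction r; simpl; [lia|]. destruct (Nat.eqb (U (S r)) i); lia. Qed.

Lemma maxmu_ge mu n i : (i < n)%nat -> mu i <= maxmu mu n.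
Proof.
  induction n; intros H; [lia|]. simpl.
  destruct (Nat.eq_dec i n) as [->|Hne]; [apply Rmax_r|].
  eapply Rle_trans; [apply IHn; lia| apply Rmax_l].
Qed.

Lemma maxmu_le1 mu n : (forall i, (i < n)%nat -> mu i <= 1) -> maxmu mu n <= 1.
Proof.
  induction n; intros H; simpl; [lra|]. apply Rmax_lub.
  - apply IHn. intros; apply H; lia.
  - apply H; lia.
Qed.

Lemma maxmu_att mu n : maxmu mu n = 0 \/ exists i, (i < n)%nat /\ mu i = maxmu mu n.
Proof.
  induction n; simpl; [left; reflexivity|].
  unfold Rmax. destruct (Rle_dec (maxmu mu n) (mu n)).
  - right. exists n. split; [lia|reflexivity].
  - destruct IHn as [H|[i [Hi Hmi]]]; [left; exact H|]. right. exists i. split; [lia|exact Hmi].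
Qed.

Lemma min_exists (P : nat -> Prop) n : (exists j, (j <= n)%nat /\ P j) ->
  exists m, (m <= n)%nat /\ P m /\ forall r, (r < m)%nat -> ~ P r.
Proof.
  induction n; intros [j [Hj Pj]].
  - exists 0%nat. split; [lia|]. split; [replace 0%nat with j by lia; exact Pj|]. intros; lia.
  - destruct (classic (exists j, (j <= n)%nat /\ P j)) as [Hex|Hno].
    + destruct (IHn Hex) as [m [? [? ?]]]. exists m. split; [lia|]. auto.
    + exists j. split; [lia|]. split; [exact Pj|]. intros r Hr Pr. apply Hno. exists r. split; [lia|exact Pr].
Qed.

Theorem lemma8 (k T W : nat) (mu : nat -> R) (Y : nat -> nat -> R) (U : nat -> nat) :
  (1 <= k)%nat ->
  (1 <= W)%nat ->
  (forall i, (i < k)%nat -> 0 <= mu i <= 1) ->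
  maxmu mu k > 0 ->
  (forall i s, (i < k)%nat -> (1 <= s <= T)%nat -> 0 <= Y i s <= 1) ->
  (forall r, (1 <= r <= T)%nat -> (U r < k)%nat) ->
  sqrt (INR T) <= INR W -> (W <= T)%nat ->
  968 * INR k * Sparam mu k T <= INR T ->
  Eevent Y U mu k T ->
  exists tau : nat,
    (1 <= tau)%nat /\ stop_cond Y U k W tau /\
    (forall r : nat, (1 <= r < tau)%nat -> ~ stop_cond Y U k W r) /\
    128 * INR k * Sparam mu k T <= INR tau <= 968 * INR k * Sparam mu k T.
Proof.
  intros Hk HW Hmu Hm HY HU HsW HWT HT [E1h [E2h E3h]].
  set (m := maxmu mu k) in *.
  assert (Hm1 : m <= 1) by (apply maxmu_le1; intros; apply Hmu; auto).
  destruct (maxmu_att mu k) as [H0|[ist [Hist Hmist]]]; [fold m in H0; lra|]. fold m in Hmist.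
  set (L := ln (INR T)).
  set (S := Sparam mu k T) in *.
  assert (HSm : S * m = 9 * L) by (unfold S, Sparam, L, c; fold m; field; lra).
  assert (HkR : 1 <= INR k) by (apply (le_INR 1); lia).
  assert (HT2 : (2 <= T)%nat).
  { destruct (Nat.le_gt_cases 2 T) as [h|h]; [exact h|]. exfalso.
    assert (T = 1)%nat by lia. subst T.
    assert (HL0 : L = 0) by (unfold L; simpl; apply ln_1).
    assert (HS0 : S = 0) by (assert (Hz : S * m = 0) by lra; destruct (Rmult_integral _ _ Hz); lra).
    assert (Hmi : mu ist > m / 64) by lra.
    specialize (E2h ist Hist Hmi 0%nat ltac:(fold S; simpl; lra) ltac:(lia)).
    unfold muhat in E2h. simpl in E2h. idtac.
    rewrite ln_1 in E2h. unfold Rdiv in E2h. rewrite Rmult_0_r, !Rmult_0_l, sqrt_0, Rmult_0_r, Rminus_0_r in E2h.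
    apply Rabs_bounds in E2h. lra. }
  assert (HL : L > / 2).
  { pose proof ln_lt_2. assert (ln 2 <= L).
    { unfold L. apply my_ln_le; [lra|]. apply (le_INR 2) in HT2. simpl in HT2. lra. }
    lra. }
  assert (HWpos : 0 < INR W) by (apply (lt_INR 0); lia).
  assert (HTpos : 0 < INR T) by (apply (lt_INR 0); lia).
  assert (HlnW1 : ln (INR W) <= L) by (apply my_ln_le; [lra| apply le_INR; auto]).
  assert (HlnW2 : L / 2 <= ln (INR W)).
  { assert (Hsq : 0 < sqrt (INR T)) by (apply sqrt_lt_R0; lra).
    assert (ln (sqrt (INR T)) <= ln (INR W)) by (apply my_ln_le; auto).
    assert (L = 2 * ln (sqrt (INR T))).
    { unfold L. rewrite <- (sqrt_sqrt (INR T)) at 1 by lra. rewrite ln_mult by auto. ring. }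
    lra. }
  assert (HS : S = 9 * L / m) by (apply (Rmult_eq_reg_r m); [rewrite HSm; field|]; lra).
  assert (HSge : S >= 9 * L).
  { rewrite HS. unfold Rdiv. assert (1 <= / m).
    { rewrite <- Rinv_1. apply Rinv_le_contravar; lra. } nra. }
  assert (HkS : S <= INR k * S) by nra.

  assert (HkSpos : 4 < INR k * S) by lra.
  assert (Hthr : forall x, 420 * c ^ 2 * ln (INR W) = x -> 1890 * L <= x <= 3780 * L).
  { intros x Hx. rewrite <- Hx. unfold c. lra. }
  assert (Hlow : forall r, INR r < 128 * INR k * S -> ~ stop_cond Y U k W r).
  { intros r Hr [i [Hi Hst]].
    destruct (INR_floor (128 * INR k * S)) as [n [Hn1 Hn2]]; [lra|].
    set (r0 := (n + 1)%nat).
    assert (Hr0 : INR r0 = INR n + 1) by (unfold r0; rewrite plus_INR; simpl; ring).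
    assert (Hr0T : (r0 <= T)%nat).
    { assert (INR n < INR T) by lra. apply INR_lt in H. unfold r0; lia. }
    assert (Hrr0 : (r <= r0)%nat).
    { assert (INR r < INR r0) by lra. apply INR_lt in H. lia. }
    set (s := cnt U i r0).
    destruct (E1h r0 ltac:(fold S; lra) Hr0T i Hi) as [Elo Ehi]. fold s in Elo, Ehi.
    assert (Hlo : INR r0 <= 2 * INR k * INR s).
    { assert (Hq: INR r0 = (INR r0 / (2*INR k)) * (2*INR k)) by (field; lra).
      rewrite Hq at 1. nra. }
    assert (Hhi : 2 * INR k * INR s <= 3 * INR r0).
    { assert (Hq: 3 * INR r0 = (3 * INR r0 / (2*INR k)) * (2*INR k)) by (field; lra).
      rewrite Hq. nra. }
    assert (Hs64 : 64 * S <= INR s).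
    { apply (Rmult_le_reg_l (2 * INR k)); lra. }
    assert (HsT : (s <= T)%nat) by (pose proof (cnt_le U i r0); unfold s; lia).
    assert (Hspos : 0 < INR s) by lra.
    assert (Hps : psum Y i (cnt U i r) <= psum Y i s).
    { apply (psum_mono Y i T); auto.
      - intros; apply HY; auto.
      - apply cnt_mono; auto. }
    assert (Hpe : psum Y i s = INR s * muhat Y i s) by (unfold muhat; field; lra).
    assert (Hmi : mu i <= m) by (apply maxmu_ge; auto).
    assert (Hmi0 : 0 <= mu i) by (apply Hmu; auto).
    assert (H1 : 2 * INR k * (INR s * m) <= 3 * INR r0 * m) by nra.
    assert (H2 : INR r0 * m <= 128 * INR k * (S * m) + m) by nra.
    rewrite HSm in H2.
    assert (Hsm : INR s * m <= 1728 * L + 3/2).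
    { apply (Rmult_le_reg_l (2 * INR k)); [lra|]. nra. }
    assert (Hsm0 : 0 <= INR s * m) by nra.
    destruct (Hthr _ eq_refl) as [Ht1 Ht2].
    destruct (Rle_lt_dec (mu i) (m / 64)) as [Hsmall|Hbig].
    + pose proof (E3h i Hi Hsmall s Hs64 HsT) as E3i. fold m in E3i.
      assert (INR s * muhat Y i s <= INR s * (m / 32)) by nra.
      lra.
    + pose proof (E2h i Hi Hbig s Hs64 HsT) as E2i. apply Rabs_bounds in E2i.
      fold L in E2i. unfold c in E2i.
      assert (Hsq : sqrt (mu i * L / INR s) <= 42 * L / INR s).
      { rewrite <- (sqrt_Rsqr (42 * L / INR s)).
        2:{ apply Rmult_le_pos; [lra|]. left; apply Rinv_0_lt_compat; lra. }
        apply sqrt_le_1_alt. unfold Rsqr.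
        apply (Rmult_le_reg_r (INR s * INR s)); [nra|].
        replace (mu i * L / INR s * (INR s * INR s)) with (L * (mu i * INR s)) by (field; lra).
        replace (42 * L / INR s * (42 * L / INR s) * (INR s * INR s)) with (1764 * L * L) by (field; lra).
        assert (mu i * INR s <= INR s * m) by nra. nra. }
      assert (Hmh : muhat Y i s <= mu i + 3 * (42 * L / INR s)) by lra.
      assert (INR s * muhat Y i s <= INR s * mu i + 126 * L).
      { replace (126 * L) with (INR s * (3 * (42 * L / INR s))) by (field; lra). nra. }
      assert (INR s * mu i <= INR s * m) by nra.
      lra. }
  destruct (INR_floor (968 * INR k * S)) as [r1 [Hr1a Hr1b]]; [lra|].
  assert (Hr1T : (r1 <= T)%nat) by (apply INR_le; lra).
  assert (Hr1A : 128 * INR k * S <= INR r1) by lra.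
  assert (Hstop : stop_cond Y U k W r1).
  { exists ist. split; [exact Hist|].
    set (s := cnt U ist r1).
    destruct (E1h r1 Hr1A Hr1T ist Hist) as [Elo Ehi]. fold s in Elo, Ehi.
    assert (Hlo : INR r1 <= 2 * INR k * INR s).
    { assert (Hq: INR r1 = (INR r1 / (2*INR k)) * (2*INR k)) by (field; lra).
      rewrite Hq at 1. nra. }
    assert (H1 : 2 * INR k * (INR s * m) >= 968 * INR k * (S * m) - m) by nra.
    rewrite HSm in H1.
    assert (Hsm : 4356 * L - 1/2 <= INR s * m).
    { apply (Rmult_le_reg_l (2 * INR k)); [lra|]. nra. }
    assert (Hs64 : 64 * S <= INR s).
    { apply (Rmult_le_reg_r m); [lra|]. rewrite Rmult_assoc, HSm. lra. }
    assert (HsT : (s <= T)%nat) by (pose proof (cnt_le U ist r1); unfold s; lia).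
    assert (Hspos : 0 < INR s) by lra.
    assert (Hpe : psum Y ist s = INR s * muhat Y ist s) by (unfold muhat; field; lra).
    assert (Hbig : mu ist > maxmu mu k / 64) by (fold m; lra).
    pose proof (E2h ist Hist Hbig s Hs64 HsT) as E2i. apply Rabs_bounds in E2i.
    fold L in E2i. unfold c in E2i. rewrite Hmist in E2i.
    assert (Hsq : sqrt (m * L / INR s) <= m / 65).
    { rewrite <- (sqrt_Rsqr (m / 65)) by lra.
      apply sqrt_le_1_alt. unfold Rsqr.
      apply (Rmult_le_reg_r (INR s)); [lra|].
      replace (m * L / INR s * INR s) with (m * L) by (field; lra).
      nra. }
    assert (Hmh : muhat Y ist s >= m * 62 / 65) by lra.
    assert (INR s * muhat Y ist s >= INR s * (m * 62 / 65)) by nra.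
    destruct (Hthr _ eq_refl) as [Ht1 Ht2].
    fold s. lra. }
  destruct (min_exists (stop_cond Y U k W) r1) as [tau [Htr1 [Hst Hmin]]].
  { exists r1; split; [lia| exact Hstop]. }
  assert (Htau : 128 * INR k * S <= INR tau).
  { destruct (Rlt_le_dec (INR tau) (128 * INR k * S)) as [h|h]; [|exact h].
    exfalso. exact (Hlow tau h Hst). }
  exists tau. split; [apply (INR_lt 0); simpl; lra|]. split; [exact Hst|]. split.
  - intros r Hr. apply Hmin. lia.
  - split; [exact Htau|]. apply le_INR in Htr1. lra.
Qed.
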